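(* Let $(\mathcal G,p)$ be a CPS on the finite set $\Omega$ with $\mathcal G$ closed under unions and nonempty intersections and covering $\Omega$, and let $\widehat{\mathcal G}$ be its $1$-augmentation. Then: (i) there exists a CPS $(\widehat{\mathcal G},\widehat p)$ extending $(\mathcal G,p)$, i.e. $\widehat p_G=p_G$ for every $G\in\mathcal G$, which moreover satisfies (ii): whenever $K\in\widehat{\mathcal G}$, $L\subseteq K$ and $\widehat p_K(L)=1$, then $L\in\widehat{\mathcal G}$; (iii) for this extension, the $1$-augmentation of $(\widehat{\mathcal G},\widehat p)$ equals $\widehat{\mathcal G}$; (iv) $(\mathcal G,p)$ is $1$-closed if and only if $\widehat{\mathcal G}=\mathcal G$.
   Context: $\Omega$ is a finite set; every subset is an event. A CPS is a pair $(\mathcal G,p)$ where $\mathcal G$ is a family of nonempty subsets of $\Omega$ and $p$ assigns to each $G\in\mathcal G$ a probability measure $p_G$ on $\Omega$ with $p_G(G)=1$ and $p_G(E)=p_G(F)p_F(E)$ whenever $E\subseteq F\subseteq G$, $F,G\in\mathcal G$. For a CPS $(\mathcal G,p)$ let $\mathcal E=\{E\subseteq\Omega: p_G(E)=1 \text{ for some } G\in\mathcal G \text{ with } E\subseteq G\}$. The $1$-augmentation $\widehat{\mathcal G}$ of $(\mathcal G,p)$ is the smallest family of subsets of $\Omega$ that contains $\mathcal E$, is closed under unions and under nonempty intersections, and covers $\Omega$. $(\mathcal G,p)$ is $1$-closed if $\mathcal E=\mathcal G$. *)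

(* Defs.v *)
(* Omega is a finite type T; events are {set T}. *)
From HB Require Import structures.
From mathcomp Require Import all_boot all_order all_algebra.
From mathcomp Require Export reals.
Set Implicit Arguments. Unset Strict Implicit. Unset Printing Implicit Defensive.
Import Order.TTheory GRing.Theory Num.Theory.
Local Open Scope ring_scope.

Section CPS.
Variables (T : finType) (R : realType).

Definition prob_measure (mu : {ffun T -> R}) : Prop :=
  (forall x, 0 <= mu x) /\ \sum_x mu x = 1.

Definition meas (mu : {ffun T -> R}) (E : {set T}) : R := \sum_(x in E) mu x.

(* Conditional probability system (G, p): p G0 is only relevant for G0 \in G. *)
Definition CPS (G : {set {set T}}) (p : {set T} -> {ffun T -> R}) : Prop :=
  (forall G0, G0 \in G -> G0 != set0) /\
  (forall G0, G0 \in G -> prob_measure (p G0) /\ meas (p G0) G0 = 1) /\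
  (forall E F G0 : {set T}, F \in G -> G0 \in G -> E \subset F -> F \subset G0 ->
     meas (p G0) E = meas (p G0) F * meas (p F) E).

Definition calE (G : {set {set T}}) (p : {set T} -> {ffun T -> R}) : {set {set T}} :=
  [set E : {set T} | [exists G0 in G, (E \subset G0) && (meas (p G0) E == 1)]].

Definition closed_fam (H : {set {set T}}) : bool :=
  [forall A in H, forall B in H, A :|: B \in H] &&
  [forall A in H, forall B in H, (A :&: B != set0) ==> (A :&: B \in H)] &&
  (cover H == setT).

Definition augment (G : {set {set T}}) (p : {set T} -> {ffun T -> R}) : {set {set T}} :=
  \bigcap_(H : {set {set T}} | (calE G p \subset H) && closed_fam H) H.

Definition one_closed (G : {set {set T}}) (p : {set T} -> {ffun T -> R}) : Prop :=
  calE G p = G.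

End CPS.

(* Main.v *)
Require Import Defs.
From mathcomp Require Import all_boot all_order all_algebra.
Local Open Scope ring_scope.
Set Implicit Arguments. Unset Strict Implicit. Unset Printing Implicit Defensive.
Import Order.TTheory GRing.Theory Num.Theory.

Section Aux.
Variables (T : finType) (R : realType).

Lemma meas_split (mu : {ffun T -> R}) (A : {set T}) :
  \sum_x mu x = meas mu A + \sum_(x | x \notin A) mu x.
Proof. by rewrite /meas (bigID (fun x => x \in A)). Qed.

Lemma outside_zero (mu : {ffun T -> R}) (A : {set T}) x :
  prob_measure mu -> meas mu A = 1 -> x \notin A -> mu x = 0.
Proof.
move=> [h0 h1] hA xA.
have : \sum_(x | x \notin A) mu x = 0.
  by apply: (@addrI _ 1); rewrite addr0 -{2}h1 (meas_split _ A) hA.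
by move/psumr_eq0P => /(_ (fun i _ => h0 i)) /(_ x xA).
Qed.

Lemma meas_full (mu : {ffun T -> R}) (E : {set T}) :
  prob_measure mu -> (forall x, 0 < mu x -> x \in E) -> meas mu E = 1.
Proof.
move=> [h0 h1] hE.
have : \sum_(x | x \notin E) mu x = 0.
  apply: big1 => x xE; apply/eqP; rewrite eq_le h0 andbT.
  by rewrite leNgt; apply/negP => /hE; rewrite (negbTE xE).
by move: h1; rewrite (meas_split _ E) => <- ->; rewrite addr0.
Qed.

Lemma meas_ge0 (mu : {ffun T -> R}) E : prob_measure mu -> 0 <= meas mu E.
Proof. by move=> [h0 _]; apply: sumr_ge0 => x _; apply: h0. Qed.

Lemma meas0 (mu : {ffun T -> R}) : meas mu set0 = 0.
Proof. by rewrite /meas big_set0. Qed.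

Lemma meas1 (mu : {ffun T -> R}) x : meas mu [set x] = mu x.
Proof. by rewrite /meas big_set1. Qed.

Definition Mset (r : T -> nat) (A : {set T}) : {set T} :=
  [set x in A | [forall y in A, (r x <= r y)%N]].
Definition W (w : T -> R) (B : {set T}) : R := \sum_(y in B) w y.
Definition lex (r : T -> nat) (w : T -> R) (A : {set T}) : {ffun T -> R} :=
  [ffun x => if x \in Mset r A then w x / W w (Mset r A) else 0].

Variables (r : T -> nat) (w : T -> R).
Hypothesis wpos : forall x, 0 < w x.

Lemma Mset_sub A : Mset r A \subset A.
Proof. by apply/subsetP => x; rewrite inE => /andP[]. Qed.

Lemma Mset_n0 A : A != set0 -> Mset r A != set0.
Proof.
case/set0Pn => x0 Ax0.
case: (@arg_minnP _ x0 (fun z => z \in A) r Ax0) => x Ax hx.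
apply/set0Pn; exists x; rewrite inE; apply/andP; split; first exact: Ax.
apply/forall_inP => y Ay; exact: hx.
Qed.

Lemma W_gt0 B : B != set0 -> 0 < W w B.
Proof.
case/set0Pn => x Bx; rewrite /W (bigD1 x) //=.
by apply: ltr_pwDl; [apply: wpos | apply: sumr_ge0 => y _; apply: ltW].
Qed.

Lemma meas_lex A E : meas (lex r w A) E = W w (E :&: Mset r A) / W w (Mset r A).
Proof.
rewrite /meas /W mulr_suml.
under eq_bigr => x _ do rewrite ffunE.
rewrite -big_mkcondr /=; apply: eq_bigl => x; by rewrite !inE.
Qed.

Lemma W0 : W w set0 = 0.
Proof. by rewrite /W big_set0. Qed.

Lemma lex_prob A : A != set0 -> prob_measure (lex r w A) /\ meas (lex r w A) A = 1.
Proof.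
move=> An0; have Wp := W_gt0 (Mset_n0 An0).
have h0 : forall x, 0 <= lex r w A x.
  move=> x; rewrite ffunE; case: ifP => // _.
  by rewrite divr_ge0 // ltW.
split; first split => //.
  rewrite (meas_split _ setT) meas_lex setTI divff ?gt_eqF //.
  by rewrite big1 ?addr0 // => x; rewrite in_setT.
by rewrite meas_lex (setIidPr (Mset_sub A)) divff ?gt_eqF.
Qed.

Lemma Mset_subI (F G0 : {set T}) : F \subset G0 -> F :&: Mset r G0 != set0 ->
  Mset r F = F :&: Mset r G0.
Proof.
move=> /subsetP FG /set0Pn [z]; rewrite !inE => /and3P [Fz Gz /forall_inP hz].
apply/setP => x; rewrite !inE; apply/idP/idP.
  case/andP => Fx /forall_inP hx; rewrite Fx (FG _ Fx) /=.
  apply/forall_inP => y Gy; exact: leq_trans (hx _ Fz) (hz _ Gy).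
case/and3P => Fx Gx /forall_inP hx; rewrite Fx /=.
by apply/forall_inP => y Fy; apply: hx; apply: FG.
Qed.

Lemma lex_chain (E F G0 : {set T}) : E \subset F -> F \subset G0 ->
  meas (lex r w G0) E = meas (lex r w G0) F * meas (lex r w F) E.
Proof.
move=> EF FG; rewrite !meas_lex.
have EFI : E :&: Mset r G0 \subset F :&: Mset r G0 by apply: setSI.
case: (eqVneq (F :&: Mset r G0) set0) => h.
  have -> : E :&: Mset r G0 = set0 by apply/eqP; rewrite -subset0 -h.
  by rewrite h W0 !mul0r.
rewrite (Mset_subI FG h).
have -> : E :&: (F :&: Mset r G0) = E :&: Mset r G0.
  by rewrite setIA (setIidPl EF).
have anz : W w (F :&: Mset r G0) != 0 by rewrite gt_eqF // W_gt0.
by rewrite [RHS]mulrC mulrA divfK.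
Qed.

End Aux.

Section Ext.
Variables (T : finType) (R : realType).

Definition uclosed (H : {set {set T}}) :=
  forall A B, A \in H -> B \in H -> A :|: B \in H.

Lemma cover_in H : uclosed H -> H != set0 -> cover H \in H.
Proof.
move=> hU /set0Pn [B HB].
have key : forall B, B \in H -> B :|: cover H \in H.
  rewrite /cover; apply: (big_ind (fun X => forall B, B \in H -> B :|: X \in H)).
  - by move=> C HC; rewrite setU0.
  - move=> X Y hX hY C HC; rewrite -(setUid C) setUACA; exact: hU (hX _ HC) (hY _ HC).
  - by move=> C HC D HD; apply: hU.
by move: (key B HB); rewrite (setUidPr (bigcup_sup _ HB)).
Qed.

Lemma ext n : forall (H : {set {set T}}) (p : {set T} -> {ffun T -> R}),
  (#|cover H| < n)%N -> uclosed H -> CPS H p ->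
  exists (r : T -> nat) (w : T -> R),
    [/\ (forall x, 0 < w x), (forall G0, G0 \in H -> p G0 = lex r w G0) &
    (forall x, 0 < p (cover H) x -> r x = 0%N)].
Proof.
elim: n => [|n IH] H p //.
move=> hn hU hC.
case: (eqVneq H set0) => [-> | Hn0].
  by exists (fun _ => 0%N), (fun _ => 1); split => // G0; rewrite inE.
have [hne [hpr hch]] := hC.
set Top := cover H.
have TopH : Top \in H := cover_in hU Hn0.
have [[pT0 pT1] pTT] := hpr _ TopH.
have pTp : prob_measure (p Top) by [].
set S := [set x | 0 < p Top x].
have STop : forall x, x \in S -> x \in Top.
  move=> x; rewrite inE; apply: contraTT => xT.
  by rewrite (outside_zero pTp pTT xT) ltxx.
have [x0 Sx0] : exists x0, x0 \in S.
  have : \sum_x p Top x <> 0 by rewrite pT1; apply/eqP; exact: oner_neq0.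
  case/(psumr_neq0P (fun i _ => pT0 i)) => x /= hx; exists x; by rewrite inE.
set H' := [set G0 in H | G0 :&: S == set0].
have H'H : forall G0, G0 \in H' -> G0 \in H by move=> G0; rewrite inE => /andP[].
have hcard : (#|cover H'| < n)%N.
  have hlt : (#|cover H'| < #|Top|)%N.
    apply: proper_card; apply/properP; split.
      apply/subsetP => x /bigcupP [G0 HG0 xG0].
      by apply/bigcupP; exists G0 => //; apply: H'H.
    exists x0; first exact: STop.
    apply/negP => /bigcupP [G0]; rewrite inE => /andP [_ /eqP hG] xG.
    have : x0 \in G0 :&: S by rewrite inE xG Sx0.
    by rewrite hG inE.
  by apply: leq_trans hlt _; rewrite -ltnS.
have hU' : forall A B, A \in H' -> B \in H' -> A :|: B \in H'.
  move=> A B; rewrite !inE => /andP [HA /eqP hA] /andP [HB /eqP hB].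
  by rewrite setIUl hA hB setU0 eqxx andbT; apply: hU.
have hC' : CPS H' p.
  split; first by move=> G0 /H'H; apply: hne.
  split; first by move=> G0 /H'H; apply: hpr.
  by move=> E F G0 /H'H HF /H'H HG; apply: hch.
have [r' [w' [hw' hp' _]]] := IH H' p hcard hU' hC'.
pose r x := if x \in S then 0%N else (r' x).+1.
pose w x := if x \in S then p Top x else w' x.
exists r, w; split.
- by move=> x; rewrite /w; case: ifP => [|_]; [rewrite inE | apply: hw'].
- move=> G0 HG0.
  case: (eqVneq (G0 :&: S) set0) => hGS.
    have HG0' : G0 \in H' by rewrite inE HG0 hGS eqxx.
    have notS : forall x, x \in G0 -> x \notin S.
      move=> x xG; apply/negP => xS.
      have : x \in G0 :&: S by rewrite inE xG xS.
      by rewrite hGS inE.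
    have hM : Mset r G0 = Mset r' G0.
      apply/setP => x; rewrite !inE; case xG: (x \in G0) => //=.
      apply: eq_forallb_in => y yG.
      by rewrite /r (negbTE (notS _ xG)) (negbTE (notS _ yG)) ltnS.
    rewrite (hp' _ HG0'); apply/ffunP => x; rewrite !ffunE hM.
    case: ifP => // xM.
    have xG := subsetP (Mset_sub r' G0) _ xM.
    rewrite /w (negbTE (notS _ xG)); congr (_ / _).
    apply: eq_bigr => y yM.
    by rewrite (negbTE (notS _ (subsetP (Mset_sub r' G0) _ yM))).
  have [z] := set0Pn _ hGS; rewrite inE => /andP [zG zS].
  have hM : Mset r G0 = G0 :&: S.
    apply/setP => x; rewrite inE in_setI; case xG: (x \in G0) => //=.
    case xS: (x \in S).
      by apply/forall_inP => y _; rewrite /r xS.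
    apply/negP => /forall_inP /(_ z zG); by rewrite /r xS zS.
  have GT : G0 \subset Top by apply: bigcup_sup.
  have hmG : meas (p Top) G0 = W w (G0 :&: S).
    rewrite /meas /W (bigID (fun x => x \in S)) /= [X in _ + X]big1 ?addr0.
      apply: eq_big => [x | x /andP [_ xS]]; first by rewrite in_setI.
      by rewrite /w xS.
    move=> x /andP [_ xS]; apply/eqP; rewrite eq_le pT0 andbT.
    by move: xS; rewrite inE -leNgt.
  have mGp : 0 < meas (p Top) G0.
    rewrite /meas (bigD1 z) //=; apply: ltr_pwDl; first by move: zS; rewrite inE.
    by apply: sumr_ge0 => y _; apply: pT0.
  have [[pG0 pG1] pGG] := hpr _ HG0.
  apply/ffunP => x; rewrite ffunE hM -hmG.
  case: (boolP (x \in G0)) => xG; last first.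
    by rewrite inE (negbTE xG) /=; apply: (outside_zero (conj pG0 pG1) pGG xG).
  have hchx := hch [set x] G0 Top HG0 TopH; rewrite sub1set xG in hchx.
  have := hchx isT GT; rewrite !meas1 => hx.
  rewrite inE xG /=; case: ifP => xS.
    by rewrite /w xS hx mulrC mulKf // gt_eqF.
  have : p Top x = 0.
    by apply/eqP; rewrite eq_le pT0 andbT; move: xS; rewrite inE => /negbT; rewrite -leNgt.
  rewrite hx => /eqP; rewrite mulf_eq0 (gt_eqF mGp) /= => /eqP //.
- by move=> x hx; rewrite /r inE hx.
Qed.

End Ext.

Section Aug.
Variables (T : finType) (R : realType).
Implicit Types (H : {set {set T}}).

Lemma closedU H : closed_fam H -> forall A B, A \in H -> B \in H -> A :|: B \in H.
Proof.
move=> /andP [/andP [/forall_inP hU _] _] A B HA HB.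
by move/forall_inP: (hU A HA) => /(_ B HB).
Qed.

Lemma closedI H : closed_fam H ->
  forall A B, A \in H -> B \in H -> A :&: B != set0 -> A :&: B \in H.
Proof.
move=> /andP [/andP [_ /forall_inP hI] _] A B HA HB.
by move/forall_inP: (hI A HA) => /(_ B HB) /implyP.
Qed.

Lemma closedC H : closed_fam H -> cover H = setT.
Proof. by move=> /andP [_ /eqP]. Qed.

Lemma closedP H : (forall A B, A \in H -> B \in H -> A :|: B \in H) ->
  (forall A B, A \in H -> B \in H -> A :&: B != set0 -> A :&: B \in H) ->
  cover H = setT -> closed_fam H.
Proof.
move=> hU hI hC; rewrite /closed_fam hC eqxx andbT.
apply/andP; split; apply/forall_inP => A HA; apply/forall_inP => B HB.
  exact: hU.
by apply/implyP; apply: hI.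
Qed.

Variables (G : {set {set T}}) (p : {set T} -> {ffun T -> R}).

Lemma aug_sub H : calE G p \subset H -> closed_fam H -> augment G p \subset H.
Proof. by move=> h1 h2; rewrite /augment; apply: bigcap_inf; rewrite h1 h2. Qed.

Lemma calE_aug : calE G p \subset augment G p.
Proof. by apply/bigcapsP => H /andP []. Qed.

Lemma calE_n0 E : E \in calE G p -> E != set0.
Proof.
rewrite inE => /exists_inP [G0 _ /andP [_ /eqP h]].
by apply/negP => /eqP E0; move: h; rewrite E0 meas0 => /eqP; rewrite eq_sym oner_eq0.
Qed.

Lemma aug_n0 K : K \in augment G p -> K != set0.
Proof.
have : augment G p \subset [set B : {set T} | B != set0].
  apply: aug_sub.
    by apply/subsetP => E /calE_n0; rewrite inE.
  apply: closedP.
  - move=> A B; rewrite !inE => /set0Pn [x Ax] _; apply/set0Pn; exists x.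
    by rewrite inE Ax.
  - by move=> A B _ _ h; rewrite inE.
  - apply/setP => x; rewrite in_setT; apply/bigcupP; exists [set x].
      by rewrite inE; apply/set0Pn; exists x; rewrite inE.
    by rewrite inE.
by move/subsetP => h /h; rewrite inE.
Qed.

Lemma G_calE : CPS G p -> G \subset calE G p.
Proof.
move=> [_ [hpr _]]; apply/subsetP => G0 HG0; rewrite inE.
by apply/exists_inP; exists G0 => //; rewrite subxx (hpr _ HG0).2 eqxx.
Qed.

Lemma aug_closed : CPS G p -> cover G = setT -> closed_fam (augment G p).
Proof.
move=> hC hcov; apply: closedP.
- move=> A B /bigcapP hA /bigcapP hB; apply/bigcapP => H hH.
  by apply: (closedU (proj2 (andP hH))); [apply: hA | apply: hB].
- move=> A B /bigcapP hA /bigcapP hB hn; apply/bigcapP => H hH.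
  by apply: (closedI (proj2 (andP hH))) => //; [apply: hA | apply: hB].
- apply/setP => x; rewrite in_setT.
  move: (in_setT x); rewrite -hcov => /bigcupP [B HB xB].
  apply/bigcupP; exists B => //.
  by apply: (subsetP calE_aug); apply: (subsetP (G_calE hC)).
Qed.

End Aug.

Theorem theorem3 (T : finType) (R : realType)
  (G : {set {set T}}) (p : {set T} -> {ffun T -> R}) :
  CPS G p -> closed_fam G ->
  (exists phat : {set T} -> {ffun T -> R},
     [/\ CPS (augment G p) phat,
         (forall G0 : {set T}, G0 \in G -> phat G0 = p G0),
         (forall K L : {set T}, K \in augment G p -> L \subset K ->
             meas (phat K) L = 1 -> L \in augment G p)
       & augment (augment G p) phat = augment G p])
  /\ (one_closed G p <-> augment G p = G).
Proof.
move=> hC hcl.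
have [hne [hpr hch]] := hC.
have hU : uclosed G by move=> A B; apply: closedU.
have [r [w [wpos hpw h0]]] := @ext T R (#|cover G|.+1) G p (ltnSn _) hU hC.
have GE := G_calE hC.
have covG := closedC hcl.
have Acl := aug_closed hC covG.
have An0 := @aug_n0 T R G p.
have EA := @calE_aug T R G p.
have lprob := @lex_prob T R r w wpos.
have ii : forall K L : {set T}, K \in augment G p -> L \subset K ->
             meas (lex r w K) L = 1 -> L \in augment G p.
  move=> K L KA LK hL.
  have Kn0 := An0 _ KA.
  have [x0 xL0] : exists x, x \in L.
    apply/set0Pn; apply/negP => /eqP L0; move: hL; rewrite L0 meas0 => /eqP.
    by rewrite eq_sym oner_eq0.
  have Gn0 : G != set0.
    move: (in_setT x0); rewrite -covG => /bigcupP [B HB _].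
    by apply/set0Pn; exists B.
  have TG : setT \in G by rewrite -covG; apply: cover_in.
  set S0 := [set x | 0 < p setT x].
  have rS0 : forall x, x \in S0 -> r x = 0%N.
    by move=> x; rewrite inE -covG => /h0.
  have KS0L : K :&: S0 \subset L.
    apply/subsetP => x; rewrite in_setI => /andP [Kx Sx].
    apply/negPn/negP => xL.
    have [hpK _] := lprob _ Kn0.
    have := outside_zero hpK hL xL.
    have xM : x \in Mset r K.
      by rewrite inE Kx /=; apply/forall_inP => y _; rewrite rS0.
    rewrite ffunE xM => /eqP; rewrite mulf_eq0 invr_eq0 !gt_eqF //.
    exact: (W_gt0 wpos (Mset_n0 r Kn0)).
  have EcalE : S0 :|: L \in calE G p.
    rewrite inE; apply/exists_inP; exists setT => //; rewrite subsetT /=; apply/eqP.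
    apply: meas_full (hpr _ TG).1 _ => x hx; rewrite in_setU; apply/orP; left.
    by rewrite inE.
  have -> : L = K :&: (S0 :|: L).
    apply/eqP; rewrite eqEsubset subsetI LK subsetUr /=.
    apply/subsetP => x; rewrite in_setI in_setU => /andP [Kx /orP [Sx|//]].
    by apply: (subsetP KS0L); rewrite in_setI Kx Sx.
  apply: (closedI Acl) => //; first exact: (subsetP EA).
  by apply/set0Pn; exists x0; rewrite in_setI in_setU xL0 orbT (subsetP LK).
split.
  exists (lex r w); split => //.
  - split; first exact: An0.
    split; first by move=> K /An0 /lprob.
    by move=> E F G0 _ _; apply: lex_chain.
  - by move=> G0 /hpw.
  - have cE : calE (augment G p) (lex r w) = augment G p.
      apply/setP => E; apply/idP/idP.
        rewrite inE => /exists_inP [K KA /andP [EK /eqP hE]]; exact: ii KA EK hE.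
      move=> EA'; rewrite inE; apply/exists_inP; exists E => //.
      by rewrite subxx /= (lprob _ (An0 _ EA')).2 eqxx.
    apply/eqP; rewrite eqEsubset; apply/andP; split.
      by apply: aug_sub; rewrite ?cE.
    by apply/bigcapsP => H; rewrite cE => /andP [].
split.
  move=> hE; apply/eqP; rewrite eqEsubset; apply/andP; split.
    by apply: aug_sub => //; rewrite hE.
  exact: subset_trans GE EA.
move=> hA; rewrite /one_closed; apply/eqP; rewrite eqEsubset GE andbT.
by apply: (subset_trans EA); rewrite hA.
Qed.
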